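(* Suppose that $A$ is normally elliptic with ellipticity constant $\kappa$ and symbol $a$ of order $m$. Then there exist $\varphi, \gamma, \omega, M > 0$ such that for all $\xi \in \mathbb{R}^d$ and all $\lambda \in \Sigma_{\varphi,-\gamma\lvert \xi \rvert^m + \omega}$ the operator $\lambda+a(\xi)$ is invertible and \[ \lVert (\lambda + a(\xi))^{-1} \rVert \leq \frac{M}{\lvert \xi \rvert^m + \lvert\lambda + \gamma\lvert \xi\rvert^m \rvert} . \] The parameters $\varphi, \gamma$ depend only on $a_m$, while $\omega$ depends on $a_m$ and $N_0(a-a_m)$. Moreover, one can choose $M = 4\kappa +2$.
   Context: Let $X$ be a Banach space, $d,m\in\mathbb{N}$, and $a(\xi)=\sum_{\lvert\alpha\rvert\le m}a_\alpha\xi^\alpha$ with $a_\alpha\in\mathcal{L}(X)$ and $a_\alpha\neq0$ for some $\lvert\alpha\rvert=m$; $a_m(\xi)=\sum_{\lvert\alpha\rvert=m}a_\alpha\xi^\alpha$ is its principal symbol and $A=a(D)$. For $\vartheta\in[0,\pi)$, $\omega\in\mathbb{R}$: $\Sigma_{\vartheta,\omega}=\{z\in\mathbb{C}:\lvert\arg(z-\omega)\rvert\le\vartheta\}\cup\{0\}$. $A$ is $(\kappa,\vartheta,\omega)$-elliptic ($\kappa\ge1$) if for all $\lvert\xi\rvert=1$ the resolvent set of $-a_m(\xi)$ contains $\Sigma_{\vartheta,\omega}$ and $\lVert(\lambda+a_m(\xi))^{-1}\rVert\le\kappa/(1+\lvert\lambda-\omega\rvert)$ for $\lambda\in\Sigma_{\vartheta,\omega}$;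 normally elliptic with ellipticity constant $\kappa$ means $(\kappa,\pi/2,0)$-elliptic. For an $\mathcal{L}(X)$-valued polynomial $p$ of degree $n$ and a multi-index $\alpha$, $N_\alpha(p)=\max_{\beta\le\alpha}\sup_{\xi\in\mathbb{R}^d}\lVert\partial^\beta p(\xi)\rVert/(1+\lvert\xi\rvert)^{n-\lvert\beta\rvert}$ (componentwise order on multi-indices); here $a-a_m$ is regarded as a polynomial of degree $m-1$. *)

(* Defs.v *)
From Stdlib Require Import Reals Lra List Arith.
From Coquelicot Require Import Coquelicot.
Open Scope R_scope.

(* Multi-indices in N^d are lists of length d.  [mindex d n] enumerates
   (without repetition) all multi-indices alpha with |alpha| <= n. *)
Fixpoint mindex (d n : nat) : list (list nat) :=
  match d with
  | O => nil :: nil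
  | S d' => flat_map (fun k => map (cons k) (mindex d' (n - k))) (seq 0 (S n))
  end.

Definition mabs (alpha : list nat) : nat := fold_right Nat.add O alpha.

(* xi^alpha = prod_i xi_i^{alpha_i}, with xi : R^d represented as nat -> R
   (only the coordinates 0..d-1 are ever used). *)
Fixpoint monom_from (xi : nat -> R) (k : nat) (alpha : list nat) : R :=
  match alpha with
  | nil => 1
  | a :: t => (xi k ^ a) * monom_from xi (S k) t
  end.
Definition monom (xi : nat -> R) (alpha : list nat) : R := monom_from xi O alpha.

Definition vnorm (d : nat) (xi : nat -> R) : R :=
  sqrt (fold_right Rplus 0 (map (fun i => xi i ^ 2) (seq 0 d))).

Section Symbols.
Context {X : CompleteNormedModule C_AbsRing}.

Definition sum_over (s : list (list nat)) (c : list nat -> X -> X)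
  (xi : nat -> R) (x : X) : X :=
  fold_right (fun alpha acc => plus (scal (RtoC (monom xi alpha)) (c alpha x)) acc)
    zero s.

Definition principal (d m : nat) (c : list nat -> X -> X) (xi : nat -> R) : X -> X :=
  sum_over (filter (fun alpha => Nat.eqb (mabs alpha) m) (mindex d m)) c xi.

Definition poly_sym (d n : nat) (c : list nat -> X -> X) (xi : nat -> R) : X -> X :=
  sum_over (mindex d n) c xi.

Definition shift (lam : C) (T : X -> X) : X -> X := fun x => plus (scal lam x) (T x).

Definition inv_bound (T : X -> X) (c : R) : Prop :=
  exists S : X -> X, is_linear S /\ (forall x, S (T x) = x) /\ (forall x, T (S x) = x)
    /\ (forall x, norm (S x) <= c * norm x).

End Symbols.

(* Sigma_{th,w} = {z : |arg(z - w)| <= th} together with the vertex w,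
   written in polar form z - w = r e^{it}, r > 0, |t| <= th. *)
Definition sector (th w : R) (z : C) : Prop :=
  z = RtoC w \/
  exists r t : R, 0 < r /\ Rabs t <= th /\ z = Cplus (RtoC w) (r * cos t, r * sin t)%R.

Definition normally_elliptic {X : CompleteNormedModule C_AbsRing}
  (d m : nat) (am : list nat -> X -> X) (kappa : R) : Prop :=
  1 <= kappa /\
  forall xi : nat -> R, vnorm d xi = 1 ->
  forall lam : C, sector (PI / 2) 0 lam ->
    inv_bound (shift lam (principal d m am xi)) (kappa / (1 + Cmod (Cminus lam (RtoC 0)))).

(* N_0(b) for b of degree n = m - 1:
   sup_{xi} ||b(xi)|| / (1 + |xi|)^n, with ||T|| = sup_{||x|| <= 1} ||T x||. *)
Definition Nzero {X : CompleteNormedModule C_AbsRing} (d n : nat)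
  (b : list nat -> X -> X) : Rbar :=
  Lub_Rbar (fun r => exists (xi : nat -> R) (x : X), norm x <= 1 /\
              r = norm (poly_sym d n b xi x) / (1 + vnorm d xi) ^ n).

(* Main.v *)
Require Import Defs.
From Stdlib Require Import Reals List Lra Lia IndefiniteDescription.
From Coquelicot Require Import Coquelicot.
Open Scope R_scope.
Set Keyed Unification.

Section G.
Context {G : AbelianGroup}.
Lemma mdef (a b : G) : minus a b = plus a (opp b). Proof. reflexivity. Qed.
Lemma pol (x : G) : @plus (AbelianGroup.AbelianMonoid G) (opp x) x = zero. Proof. exact (plus_opp_l x). Qed.
Lemma por (x : G) : @plus (AbelianGroup.AbelianMonoid G) x (opp x) = zero. Proof. exact (plus_opp_r x). Qed.
Lemma g_opp_uniq (a b : G) : plus a b = zero -> a = opp b.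
Proof.
  intros H. rewrite <- (plus_zero_r a), <- (por b), plus_assoc, H, plus_zero_l. easy.
Qed.
Lemma g_swap (a b c e : G) : plus (minus a b) (minus c e) = minus (plus a c) (plus b e).
Proof.
  rewrite !mdef. rewrite opp_plus. rewrite !plus_assoc. f_equal.
  rewrite <- !plus_assoc. f_equal. apply plus_comm.
Qed.
Lemma g_mm (y a b : G) : minus (minus y a) (minus y b) = minus b a.
Proof.
  rewrite !mdef. rewrite opp_plus, opp_opp.
  rewrite (plus_comm (opp y) b), plus_assoc.
  rewrite (plus_comm (plus (plus y (opp a)) b)), !plus_assoc, pol, plus_zero_l.
  apply plus_comm.
Qed.
Lemma g_fix (l y u0 a b : G) :
  minus (plus l a) y = plus (minus l (minus y b)) (minus a b).
Proof.
  rewrite !mdef, opp_plus, opp_opp.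
  rewrite (plus_comm a (opp b)), !plus_assoc.
  rewrite <- (plus_assoc _ b (opp b)), por, plus_zero_r.
  rewrite <- !plus_assoc, (plus_comm a). easy.
Qed.
End G.

Section GG.
Context {G : AbelianGroup}.
Lemma g_minus0 (a b : G) : minus a b = zero -> a = b.
Proof.
  intros H. rewrite <- (plus_zero_r a), <- (pol b), plus_assoc.
  rewrite <- mdef, H, plus_zero_l. easy.
Qed.
Lemma g_solve (x c y : G) : plus x c = y -> x = minus y c.
Proof.
  intros <-. rewrite mdef, <- plus_assoc, por, plus_zero_r. easy.
Qed.
End GG.


Section Neu.
Context {X : CompleteNormedModule C_AbsRing}.

Lemma Xnorm_eq_zero (x : X) : norm x = 0 -> x = zero. Proof. exact (norm_eq_zero x). Qed.
Lemma Xg_minus0 (a b : X) : minus a b = zero -> a = b. Proof. exact (g_minus0 a b). Qed.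
Lemma Xg_opp_uniq (a b : X) : plus a b = zero -> a = opp b. Proof. exact (g_opp_uniq a b). Qed.
Lemma Xg_solve (x c y : X) : plus x c = y -> x = minus y c. Proof. exact (g_solve x c y). Qed.
Lemma Xmdef (a b : X) : minus a b = plus a (opp b). Proof. reflexivity. Qed.
Lemma Xg_mm (y a b : X) : minus (minus y a) (minus y b) = minus b a. Proof. exact (g_mm y a b). Qed.
Lemma Xg_fix (l y a b : X) :
  minus (plus l a) y = plus (minus l (minus y b)) (minus a b). Proof. exact (g_fix l y y a b). Qed.
Lemma Xminus_trans (r x y : X) : minus x y = plus (minus x r) (minus r y). Proof. exact (minus_trans r x y). Qed.
Lemma Xminus_eq_zero (x : X) : minus x x = zero. Proof. exact (minus_eq_zero x). Qed.
Lemma Xminus_zero_r (x : X) : minus x zero = x. Proof. exact (minus_zero_r x). Qed.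
Lemma Xnorm_mm (x : X) : norm (minus x x) = 0. Proof. rewrite Xminus_eq_zero. exact norm_zero. Qed.
Lemma Xnorm_opp (x : X) : norm (opp x) = norm x. Proof. exact (norm_opp x). Qed.
Lemma Xnorm_triangle (x y : X) : norm (plus x y) <= norm x + norm y. Proof. exact (norm_triangle x y). Qed.
Lemma Xlin_minus (K : X -> X) : is_linear K -> forall a b, K (minus a b) = minus (K a) (K b).
Proof. intros HK a b. exact (linear_minus K a b HK). Qed.
Lemma Xlin_zero (K : X -> X) : is_linear K -> K zero = zero.
Proof. intros HK. exact (linear_zero K HK). Qed.

Lemma Xnorm_compat1 (x y : X) (eps : R) : norm (minus y x) < eps -> ball x eps y.
Proof. exact (norm_compat1 x y eps). Qed.
Lemma Xnorm_compat2 (x y : X) (eps : posreal) : ball x eps y -> norm (minus y x) < norm_factor (V:=X) * eps.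
Proof. exact (norm_compat2 x y eps). Qed.

Lemma norm_minus_sym (a b : X) : norm (minus a b) = norm (minus b a).
Proof. rewrite <- Xnorm_opp. f_equal. exact (opp_minus a b). Qed.

Lemma neu_uniq (K : X -> X) : is_linear K -> (forall x, norm (K x) <= /2 * norm x) ->
  forall a b, plus a (K a) = plus b (K b) -> a = b.
Proof.
  intros HK Hn a b H.
  assert (H0 : plus (minus a b) (K (minus a b)) = zero).
  { assert (E : K (minus a b) = minus (K a) (K b)) by (exact (linear_minus K a b HK)).
    assert (E2 : plus (minus a b) (minus (K a) (K b)) = minus (plus a (K a)) (plus b (K b)))
      by exact (g_swap _ _ _ _).
    rewrite E, E2, H. exact (minus_eq_zero _). }
  apply Xg_opp_uniq in H0.
  apply Xg_minus0, Xnorm_eq_zero.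
  apply Rle_antisym; [|apply norm_ge_0].
  assert (norm (minus a b) <= /2 * norm (minus a b)).
  { rewrite H0 at 1. rewrite Xnorm_opp. apply Hn. }
  lra.
Qed.

Lemma neu_bound (K : X -> X) : (forall x, norm (K x) <= /2 * norm x) ->
  forall x y, plus x (K x) = y -> norm x <= 2 * norm y.
Proof.
  intros Hn x y H. apply Xg_solve in H.
  assert (norm x <= norm y + norm (K x)).
  { rewrite H at 1. rewrite Xmdef. eapply Rle_trans. apply Xnorm_triangle. rewrite Xnorm_opp. lra. }
  specialize (Hn x). lra.
Qed.

Fixpoint useq (K : X -> X) (y : X) (n : nat) : X :=
  match n with O => zero | S n => minus y (K (useq K y n)) end.

Lemma useq_diff (K : X -> X) y : is_linear K -> (forall x, norm (K x) <= /2 * norm x) ->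
  forall n, norm (minus (useq K y (S n)) (useq K y n)) <= (/2)^n * norm y.
Proof.
  intros HK Hn n. induction n as [|n IH].
  - simpl. rewrite (Xlin_zero K HK), !Xminus_zero_r. lra.
  - change (useq K y (S (S n))) with (minus y (K (useq K y (S n)))).
    change (useq K y (S n)) with (minus y (K (useq K y n))) at 2.
    rewrite Xg_mm, <- (Xlin_minus K HK).
    eapply Rle_trans. apply Hn. rewrite norm_minus_sym. simpl.
    assert (0 <= /2) by lra. 
    rewrite Rmult_assoc. apply Rmult_le_compat_l; auto.
Qed.

Lemma useq_tail (K : X -> X) y : is_linear K -> (forall x, norm (K x) <= /2 * norm x) ->
  forall n k, norm (minus (useq K y (n + k)) (useq K y n)) <= 2 * (/2)^n * norm y - 2 * (/2)^(n+k) * norm y.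
Proof.
  intros HK Hn n k. induction k as [|k IH].
  - rewrite Nat.add_0_r, Xnorm_mm. lra.
  - rewrite Nat.add_succ_r, (Xminus_trans (useq K y (n + k))).
    eapply Rle_trans. apply Xnorm_triangle.
    pose proof (useq_diff K y HK Hn (n + k)).
    simpl pow. pose proof (norm_ge_0 y). lra.
Qed.

Lemma useq_cauchy (K : X -> X) y : is_linear K -> (forall x, norm (K x) <= /2 * norm x) ->
  exists l, filterlim (useq K y) eventually (locally l).
Proof.
  intros HK Hn. apply (filterlim_locally_cauchy (F:=eventually) (useq K y)).
  intros eps.
  pose proof (norm_ge_0 y) as Hy.
  destruct (pow_lt_1_zero (/2) ltac:(rewrite Rabs_pos_eq; lra) (eps / (2 * norm y + 1)))
    as [N HN].
  { apply Rdiv_lt_0_compat. apply cond_pos. lra. }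
  assert (Hw : forall u v, (N <= u)%nat -> (u <= v)%nat -> norm (minus (useq K y v) (useq K y u)) < eps).
  { intros u v Hu Huv. replace v with (u + (v - u))%nat by lia.
    eapply Rle_lt_trans. apply useq_tail; auto.
    specialize (HN u Hu). rewrite Rabs_pos_eq in HN by (apply pow_le; lra).
    pose proof (pow_le (/2) (u + (v - u)) ltac:(lra)).
    assert (Hp : (/2)^u * (2 * norm y + 1) < eps).
    { apply Rmult_lt_reg_r with (/ (2 * norm y + 1)). apply Rinv_0_lt_compat; lra.
      rewrite Rmult_assoc, Rinv_r by lra. unfold Rdiv in HN. lra. }
    pose proof (pow_le (/2) u ltac:(lra)). nra. }
  exists (fun n => (N <= n)%nat). split. { exists N. auto. }
  intros u v Hu Hv. apply Xnorm_compat1.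
  destruct (Nat.le_ge_cases u v).
  - apply Hw; auto.
  - rewrite norm_minus_sym. apply Hw; auto.
Qed.


Lemma Xnorm_ge_0 (x : X) : 0 <= norm x. Proof. exact (norm_ge_0 x). Qed.
Lemma Xg_swap2 (a b c e : X) : plus (plus a b) (plus c e) = plus (plus a c) (plus b e).
Proof.
  rewrite !plus_assoc. f_equal. rewrite <- !plus_assoc. f_equal. apply plus_comm.
Qed.
Lemma Xscal_distr_l (k : C) (u v : X) : scal k (plus u v) = plus (scal k u) (scal k v).
Proof. exact (scal_distr_l k u v). Qed.
Lemma Xlin_plus (K : X -> X) : is_linear K -> forall a b, K (plus a b) = plus (K a) (K b).
Proof. intros HK a b. exact (linear_plus K HK a b). Qed.
Lemma Xlin_scal (K : X -> X) : is_linear K -> forall (k : C) a, K (scal k a) = scal k (K a).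
Proof. intros HK k a. exact (linear_scal K HK k a). Qed.

Lemma neu_exists (K : X -> X) y : is_linear K -> (forall x, norm (K x) <= /2 * norm x) ->
  exists x, plus x (K x) = y.
Proof.
  intros HK Hn. destruct (useq_cauchy K y HK Hn) as [l Hl].
  exists l. apply Xg_minus0, Xnorm_eq_zero.
  set (z := minus (plus l (K l)) y).
  pose proof (Xnorm_ge_0 z) as Hz0.
  destruct (Rle_lt_or_eq_dec 0 (norm z) Hz0) as [Hz|Hz]; [|auto].
  exfalso.
  pose proof (@norm_factor_gt_0 C_AbsRing X) as Hf.
  assert (He : 0 < norm z / (4 * norm_factor (V:=X))).
  { apply Rdiv_lt_0_compat; lra. }
  set (e := mkposreal _ He).
  assert (Hev := Hl _ (locally_ball l e)).
  destruct Hev as [N HN].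
  pose proof (Xnorm_compat2 _ _ e (HN N (le_n N))) as H1.
  pose proof (Xnorm_compat2 _ _ e (HN (S N) (le_S _ _ (le_n N)))) as H2.
  assert (Ez : z = plus (minus l (useq K y (S N))) (K (minus l (useq K y N)))).
  { unfold z. rewrite (Xlin_minus K HK). apply Xg_fix. }
  assert (norm z <= norm (minus l (useq K y (S N))) + /2 * norm (minus l (useq K y N))).
  { rewrite Ez at 1. eapply Rle_trans. apply Xnorm_triangle. pose proof (Hn (minus l (useq K y N))). lra. }
  rewrite norm_minus_sym in H1, H2.
  simpl in H1, H2, H.
  assert (norm_factor (V:=X) * (norm z / (4 * norm_factor (V:=X))) = norm z / 4) by (field; lra).
  lra.
Qed.

Lemma neumann (K : X -> X) : is_linear K -> (forall x, norm (K x) <= /2 * norm x) ->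
  exists J : X -> X, is_linear J /\ (forall x, J (plus x (K x)) = x) /\ (forall y, plus (J y) (K (J y)) = y) /\ (forall y, norm (J y) <= 2 * norm y).
Proof.
  intros HK Hn.
  set (J := fun y => proj1_sig (constructive_indefinite_description _ (neu_exists K y HK Hn))).
  assert (HJ : forall y, plus (J y) (K (J y)) = y).
  { intros y. unfold J. destruct (constructive_indefinite_description _ _). simpl. auto. }
  assert (HJb : forall y, norm (J y) <= 2 * norm y).
  { intros y. apply (neu_bound K Hn). apply HJ. }
  exists J. split; [|split; [|split]]; auto.
  - constructor.
    + intros a b. apply (neu_uniq K HK Hn).
      rewrite HJ, (Xlin_plus K HK), Xg_swap2, !HJ. easy.
    + intros k a. apply (neu_uniq K HK Hn).
      rewrite HJ, (Xlin_scal K HK), <- Xscal_distr_l, HJ. easy.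
    + exists 2. split; [lra|]. auto.
  - intros x. apply (neu_uniq K HK Hn). rewrite HJ. easy.
Qed.
End Neu.

Lemma mindex_len d : forall n alpha, In alpha (mindex d n) -> length alpha = d.
Proof.
  induction d as [|d IH]; intros n alpha H.
  - simpl in H. destruct H as [<-|[]]. reflexivity.
  - cbn [mindex] in H. apply in_flat_map in H. destruct H as [k [_ Hk]].
    apply in_map_iff in Hk. destruct Hk as [t [<- Ht]]. simpl. f_equal. eapply IH. exact Ht.
Qed.

Lemma monom_homog (xi eta : nat -> R) (c : R) : forall alpha k,
  (forall i, (k <= i < k + length alpha)%nat -> xi i = c * eta i) ->
  monom_from xi k alpha = c ^ (mabs alpha) * monom_from eta k alpha.
Proof.
  induction alpha as [|a t IH]; intros k H.
  - simpl. ring.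
  - simpl. rewrite (IH (S k)).
    + rewrite (H k) by (simpl; lia). rewrite Rpow_mult_distr, pow_add. ring.
    + intros i Hi. apply H. simpl. lia.
Qed.

Section Sym.
Context {X : CompleteNormedModule C_AbsRing}.

Lemma Xscal_assoc (a b : C) (u : X) : scal a (scal b u) = scal (Cmult a b) u.
Proof. exact (scal_assoc a b u). Qed.
Lemma Xscal_zero_r (a : C) : scal a (@zero X) = zero.
Proof. exact (scal_zero_r a). Qed.
Lemma Xscal_one (u : X) : scal (RtoC 1) u = u.
Proof. exact (scal_one u). Qed.
Lemma Xscal_zero_l (u : X) : scal (RtoC 0) u = zero.
Proof. exact (scal_zero_l u). Qed.
Lemma Xplus_zero_r (u : X) : plus u zero = u.
Proof. exact (plus_zero_r u). Qed.
Lemma Xnorm_scalR (t : R) (u : X) : norm (scal (RtoC t) u) <= Rabs t * norm u.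
Proof. rewrite <- Cmod_R. exact (norm_scal (RtoC t) u). Qed.
Lemma Xnorm_scal (t : C) (u : X) : norm (scal t u) <= Cmod t * norm u.
Proof. exact (norm_scal t u). Qed.
Lemma Xscal_inv (r : R) (u : X) : r <> 0 -> scal (RtoC (/ r)) (scal (RtoC r) u) = u.
Proof.
  intros Hr. rewrite Xscal_assoc, <- RtoC_mult, Rinv_l by auto. apply Xscal_one.
Qed.
Lemma Xscal_inv' (r : R) (u : X) : r <> 0 -> scal (RtoC r) (scal (RtoC (/ r)) u) = u.
Proof.
  intros Hr. rewrite Xscal_assoc, <- RtoC_mult, Rinv_r by auto. apply Xscal_one.
Qed.

Lemma is_linear_scalC (k : C) : is_linear (fun x : X => scal k x).
Proof. refine (is_linear_scal_r (K:=C_AbsRing) (V:=X) k _). intros; apply Cmult_comm. Qed.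

Lemma is_linear_plusf (f g : X -> X) : is_linear f -> is_linear g -> is_linear (fun x => plus (f x) (g x)).
Proof.
  intros Hf Hg.
  apply (is_linear_comp (fun x => (f x, g x)) (fun p : X * X => plus (fst p) (snd p))).
  - apply is_linear_prod; auto.
  - exact (is_linear_plus (K:=C_AbsRing) (V:=X)).
Qed.

Lemma sum_over_linear (s : list (list nat)) (c : list nat -> X -> X) xi :
  (forall alpha, In alpha s -> is_linear (c alpha)) -> is_linear (sum_over s c xi).
Proof.
  induction s as [|a s IH]; intros H; simpl.
  - unfold sum_over. simpl. exact (is_linear_zero (K:=C_AbsRing) (U:=X) (V:=X)).
  - unfold sum_over. simpl. apply is_linear_plusf.
    + apply (is_linear_comp (c a) (fun x => scal (RtoC (monom xi a)) x)).
      * apply H. left; auto.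
      * apply is_linear_scalC.
    + apply IH. intros; apply H; right; auto.
Qed.

Lemma sum_over_cons a s (c : list nat -> X -> X) xi x :
  sum_over (a :: s) c xi x = plus (scal (RtoC (monom xi a)) (c a x)) (sum_over s c xi x).
Proof. reflexivity. Qed.
Lemma sum_over_nil (c : list nat -> X -> X) xi x : sum_over nil c xi x = zero.
Proof. reflexivity. Qed.

Lemma sum_over_homog (s : list (list nat)) (c : list nat -> X -> X) (xi eta : nat -> R) (c0 : R) d m x :
  (forall alpha, In alpha s -> mabs alpha = m /\ length alpha = d) ->
  (forall i, (i < d)%nat -> xi i = c0 * eta i) ->
  sum_over s c xi x = scal (RtoC (c0 ^ m)) (sum_over s c eta x).
Proof.
  intros Hs Hx. induction s as [|a s IH].
  - rewrite !sum_over_nil, Xscal_zero_r. easy.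
  - rewrite !sum_over_cons. rewrite IH by (intros; apply Hs; right; auto).
    rewrite Xscal_distr_l, Xscal_assoc, <- RtoC_mult.
    destruct (Hs a (or_introl eq_refl)) as [Hm Hl].
    unfold monom. rewrite (monom_homog xi eta c0 a 0). rewrite Hm. easy.
    intros i Hi. apply Hx. lia.
Qed.

End Sym.

Lemma sumsq_scale (xi : nat -> R) (r : R) (l : list nat) : r <> 0 ->
  fold_right Rplus 0 (map (fun i => (xi i / r) ^ 2) l) =
  fold_right Rplus 0 (map (fun i => xi i ^ 2) l) / r ^ 2.
Proof.
  intros Hr. induction l as [|a l IH]; cbn [map fold_right].
  - unfold Rdiv. ring.
  - rewrite IH. field. auto.
Qed.

Lemma sumsq_ge0 (xi : nat -> R) (l : list nat) : 0 <= fold_right Rplus 0 (map (fun i => xi i ^ 2) l).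
Proof.
  induction l as [|a l IH]; cbn [map fold_right]. lra. pose proof (pow2_ge_0 (xi a)). lra.
Qed.

Lemma sumsq_zero (xi : nat -> R) (l : list nat) : fold_right Rplus 0 (map (fun i => xi i ^ 2) l) = 0 ->
  forall i, In i l -> xi i = 0.
Proof.
  induction l as [|a l IH]; cbn [map fold_right In]; intros H i Hi. destruct Hi.
  pose proof (pow2_ge_0 (xi a)). pose proof (sumsq_ge0 xi l).
  destruct Hi as [<-|Hi].
  - assert (xi a ^ 2 = 0) by lra. simpl in *. nra.
  - apply IH; auto. lra.
Qed.

Lemma vnorm_scale d (xi : nat -> R) (r : R) : 0 < r -> vnorm d (fun i => xi i / r) = vnorm d xi / r.
Proof.
  intros Hr. unfold vnorm. rewrite sumsq_scale by lra. rewrite sqrt_div_alt.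
  - rewrite sqrt_pow2 by lra. easy.
  - apply pow_lt; auto.
Qed.

Lemma vnorm_zero d (xi : nat -> R) : vnorm d xi = 0 -> forall i, (i < d)%nat -> xi i = 0.
Proof.
  unfold vnorm. intros H i Hi. apply sqrt_eq_0 in H; [|apply sumsq_ge0].
  apply (sumsq_zero xi (seq 0 d) H). apply in_seq. lia.
Qed.

Lemma vnorm_ge0 d xi : 0 <= vnorm d xi.
Proof. apply sqrt_pos. Qed.

Lemma sector_re w (z : C) : sector (PI / 2) w z -> w <= fst z.
Proof.
  intros [->|[r [t [Hr [Ht ->]]]]]; simpl. lra.
  assert (-(PI/2) <= t <= PI/2) by (unfold Rabs in Ht; destruct Rcase_abs; lra).
  pose proof (cos_ge_0 t ltac:(lra) ltac:(lra)). nra.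
Qed.

Lemma sector_of_re_pos (z : C) : 0 < fst z -> sector (PI / 2) 0 z.
Proof.
  destruct z as [a b]. simpl. intros Ha. right.
  set (u := b / a).
  assert (Hs : 0 < sqrt (1 + u²)) by (apply sqrt_lt_R0; pose proof (Rle_0_sqr u); lra).
  exists (a * sqrt (1 + u²)), (atan u). split; [|split].
  - apply Rmult_lt_0_compat; auto.
  - pose proof (atan_bound u). apply Rabs_le. lra.
  - rewrite cos_atan, sin_atan. unfold Cplus, RtoC; simpl. f_equal.
    + field. lra.
    + unfold u in *. field. split; lra.
Qed.

Section Res.
Context {X : CompleteNormedModule C_AbsRing}.

Lemma principal_homog d m (am : list nat -> X -> X) (xi eta : nat -> R) (c0 : R) x :
  (forall i, (i < d)%nat -> xi i = c0 * eta i) ->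
  principal d m am xi x = scal (RtoC (c0 ^ m)) (principal d m am eta x).
Proof.
  intros H. unfold principal. apply (sum_over_homog _ _ _ _ _ d m); auto.
  intros alpha Ha. apply filter_In in Ha. destruct Ha as [Ha Hb].
  split. apply Nat.eqb_eq; auto. eapply mindex_len; eauto.
Qed.

Lemma principal_linear d m (am : list nat -> X -> X) xi :
  (forall alpha, In alpha (mindex d m) -> mabs alpha = m -> is_linear (am alpha)) ->
  is_linear (principal d m am xi).
Proof.
  intros H. unfold principal. apply sum_over_linear.
  intros alpha Ha. apply filter_In in Ha. destruct Ha as [Ha Hb].
  apply H; auto. apply Nat.eqb_eq; auto.
Qed.

Lemma poly_linear d n (b : list nat -> X -> X) xi :
  (forall alpha, In alpha (mindex d n) -> is_linear (b alpha)) ->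
  is_linear (poly_sym d n b xi).
Proof.
  intros H. unfold poly_sym. apply sum_over_linear. auto.
Qed.

Lemma resolvent d m (am : list nat -> X -> X) kappa : (1 <= m)%nat ->
  (forall alpha, In alpha (mindex d m) -> mabs alpha = m -> is_linear (am alpha)) ->
  normally_elliptic d m am kappa ->
  forall xi (mu : C), 0 < fst mu ->
  exists Rz : X -> X, is_linear Rz /\ (forall x, Rz (shift mu (principal d m am xi) x) = x) /\
    (forall x, shift mu (principal d m am xi) (Rz x) = x) /\
    (forall x, norm (Rz x) <= kappa / (vnorm d xi ^ m + Cmod mu) * norm x).
Proof.
  intros Hm Hlin [Hk Hell] xi mu Hmu.
  assert (Hmu0 : mu <> RtoC 0). { intros E; rewrite E in Hmu; simpl in Hmu; lra. }
  assert (Hcm : 0 < Cmod mu) by (apply Cmod_gt_0; auto).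
  pose proof (vnorm_ge0 d xi) as Hrho.
  destruct (Rle_lt_or_eq_dec _ _ Hrho) as [Hr|Hr].
  - set (rho := vnorm d xi) in *.
    set (eta := fun i => xi i / rho).
    assert (Heta : vnorm d eta = 1) by (unfold eta; rewrite vnorm_scale by lra; fold rho; field; lra).
    set (r := rho ^ m). assert (Hr' : 0 < r) by (apply pow_lt; auto).
    set (nu := (fst mu / r, snd mu / r) : C).
    assert (Hnu : mu = Cmult (RtoC r) nu).
    { unfold nu. destruct mu as [a b]. unfold Cmult, RtoC; simpl. f_equal; field; lra. }
    assert (Hsec : sector (PI/2) 0 nu) by (apply sector_of_re_pos; simpl; apply Rdiv_lt_0_compat; auto).
    destruct (Hell eta Heta nu Hsec) as [S0 [HS0l [HS0a [HS0b HS0n]]]].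
    assert (HA : forall x, shift mu (principal d m am xi) x = scal (RtoC r) (shift nu (principal d m am eta) x)).
    { intros x. unfold shift. rewrite (principal_homog d m am xi eta rho).
      - rewrite Xscal_distr_l, Xscal_assoc, <- Hnu. easy.
      - intros; unfold eta; field; lra. }
    assert (Hcnu : Cmod (Cminus nu (RtoC 0)) = Cmod mu / r).
    { replace (Cminus nu (RtoC 0)) with nu.
      - rewrite Hnu, Cmod_mult, Cmod_R, Rabs_pos_eq by lra. field. lra.
      - unfold nu, Cminus, Cplus, Copp, RtoC; simpl. f_equal; ring. }
    exists (fun x => S0 (scal (RtoC (/ r)) x)).
    split; [|split; [|split]].
    + apply (is_linear_comp (fun x => scal (RtoC (/r)) x) S0); [apply is_linear_scalC|auto].
    + intros x. rewrite HA, Xscal_inv by lra. apply HS0a.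
    + intros x. rewrite HA, HS0b. apply Xscal_inv'. lra.
    + intros x. eapply Rle_trans. apply HS0n. rewrite Hcnu.
      assert (Hp : 0 < 1 + Cmod mu / r) by (pose proof (Rdiv_lt_0_compat _ _ Hcm Hr'); lra).
      eapply Rle_trans. apply Rmult_le_compat_l.
      { apply Rdiv_le_0_compat; lra. }
      apply Xnorm_scalR. rewrite Rabs_pos_eq by (apply Rlt_le, Rinv_0_lt_compat; auto).
      right. fold r. field. split; lra.
  - assert (Hz : forall x, principal d m am xi x = zero).
    { intros x. rewrite (principal_homog d m am xi xi 0).
      - rewrite pow_i by lia. apply Xscal_zero_l.
      - intros i Hi. rewrite (vnorm_zero d xi) by auto. ring. }
    exists (fun x => scal (Cinv mu) x).
    split; [|split; [|split]].
    + apply is_linear_scalC.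
    + intros x. unfold shift. rewrite Hz, Xplus_zero_r, Xscal_assoc, Cinv_l by auto. apply Xscal_one.
    + intros x. unfold shift. rewrite Hz, Xplus_zero_r, Xscal_assoc, Cinv_r by auto. apply Xscal_one.
    + intros x. eapply Rle_trans. apply Xnorm_scal. rewrite Cmod_inv by auto.
      rewrite <- Hr, pow_i by lia. rewrite Rplus_0_l.
      apply Rmult_le_compat_r. apply Xnorm_ge_0.
      unfold Rdiv. rewrite <- (Rmult_1_l (/ Cmod mu)) at 1. apply Rmult_le_compat_r; [|lra].
      apply Rlt_le, Rinv_0_lt_compat; auto.
Qed.
End Res.

Section NZ.
Context {X : CompleteNormedModule C_AbsRing}.
Lemma Xnorm_zero0 : norm (@zero X) = 0. Proof. exact norm_zero. Qed.

Lemma nzero_bound d n (b : list nat -> X -> X) N :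
  (forall alpha, In alpha (mindex d n) -> is_linear (b alpha)) ->
  Nzero d n b = Finite N ->
  forall xi x, norm (poly_sym d n b xi x) <= N * (1 + vnorm d xi)^n * norm x.
Proof.
  intros Hl HN xi x.
  pose proof (poly_linear d n b xi Hl) as HB.
  pose proof (Lub_Rbar_correct (fun r => exists (xi : nat -> R) (x : X), norm x <= 1 /\
     r = norm (poly_sym d n b xi x) / (1 + vnorm d xi)^n)) as [Hub _].
  unfold Nzero in HN. rewrite HN in Hub.
  assert (Hp : 0 < (1 + vnorm d xi)^n) by (apply pow_lt; pose proof (vnorm_ge0 d xi); lra).
  set (B := poly_sym d n b xi) in *.
  set (p := (1 + vnorm d xi)^n) in *.
  assert (Key : forall y : X, norm y <= 1 -> norm (B y) <= N * p).
  { intros y Hy.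
    assert (H1 : norm (B y) / p <= N).
    { apply (Hub (norm (B y) / p)). exists xi, y. auto. }
    replace (norm (B y)) with (norm (B y) / p * p) by (field; lra).
    apply Rmult_le_compat_r; lra. }
  pose proof (Xnorm_ge_0 x) as Hx.
  destruct (Rle_lt_or_eq_dec _ _ Hx) as [Hx'|Hx'].
  - set (y := scal (RtoC (/ norm x)) x).
    assert (Hy : norm y <= 1).
    { unfold y. eapply Rle_trans. apply Xnorm_scalR.
      rewrite Rabs_pos_eq by (apply Rlt_le, Rinv_0_lt_compat; auto). right. field. lra. }
    assert (HBx : B x = scal (RtoC (norm x)) (B y)).
    { unfold y. rewrite (Xlin_scal B HB), Xscal_inv'. easy. lra. }
    rewrite HBx. eapply Rle_trans. apply Xnorm_scalR. rewrite Rabs_pos_eq by lra.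
    specialize (Key y Hy). nra.
  - assert (Hx0 : x = zero) by (apply Xnorm_eq_zero; auto).
    rewrite Hx0, (Xlin_zero B HB), Xnorm_zero0. lra.
Qed.
End NZ.

Lemma omega_choice (C0 : R) (n : nat) : 0 <= C0 ->
  exists omega, 0 < omega /\ forall rho, 0 <= rho -> C0 * (1 + rho)^n <= rho^(S n) + omega.
Proof.
  intros HC.
  set (L := 2^n * C0 + 1).
  exists (C0 * (1 + L)^n + 1). split.
  { assert (0 <= (1 + L)^n) by (apply pow_le; unfold L; pose proof (pow_le 2 n); nra). nra. }
  intros rho Hrho.
  pose proof (pow_le 2 n ltac:(lra)) as H2.
  destruct (Rle_lt_dec rho L) as [H|H].
  - assert ((1 + rho)^n <= (1 + L)^n) by (apply pow_incr; lra).
    pose proof (pow_le rho (S n) Hrho). nra.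
  - assert (HL : 1 <= L) by (unfold L; nra).
    assert ((1 + rho)^n <= (2 * rho)^n) by (apply pow_incr; lra).
    rewrite Rpow_mult_distr in H0.
    assert (0 <= rho ^ n) by (apply pow_le; lra).
    simpl. assert (C0 * (2^n * rho^n) <= rho * rho^n).
    { assert (2^n * C0 <= rho) by (unfold L in H; lra). nra. }
    assert (C0 * (1 + rho)^n <= C0 * (2^n * rho^n)) by (apply Rmult_le_compat_l; auto).
    assert (0 <= (1 + L)^n) by (apply pow_le; lra).
    assert (0 <= C0 * (1 + L)^n) by (apply Rmult_le_pos; auto).
    lra.
Qed.

Theorem proposition4p3 :
  forall (X : CompleteNormedModule C_AbsRing) (d m : nat) (kappa : R)
    (am : list nat -> X -> X),
    (1 <= m)%nat ->
    (forall alpha, In alpha (mindex d m) -> mabs alpha = m -> is_linear (am alpha)) ->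
    (exists alpha, In alpha (mindex d m) /\ mabs alpha = m /\
       exists x : X, am alpha x <> zero) ->
    normally_elliptic d m am kappa ->
    exists phi gamma : R, 0 < phi < PI /\ 0 < gamma /\
      forall N : R, exists omega : R, 0 < omega /\
        forall b : list nat -> X -> X,
          (forall alpha, In alpha (mindex d (m - 1)) -> is_linear (b alpha)) ->
          Nzero d (m - 1) b = Finite N ->
          forall (xi : nat -> R) (lam : C),
            sector phi (- gamma * vnorm d xi ^ m + omega) lam ->
            inv_bound
              (shift lam (fun x => plus (principal d m am xi x) (poly_sym d (m - 1) b xi x)))
              ((4 * kappa + 2) /
                 (vnorm d xi ^ m + Cmod (Cplus lam (RtoC (gamma * vnorm d xi ^ m))))).
Proof.
  intros X d m kappa am Hm Hlin _ Hell.
  pose proof Hell as [Hk _].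
  exists (PI/2), (/ (4 * kappa)).
  split. { pose proof PI_RGT_0. lra. }
  split. { apply Rinv_0_lt_compat; lra. }
  intros N.
  destruct (omega_choice (4 * kappa * Rabs N) (m - 1)) as [omega [Hom Homb]].
  { pose proof (Rabs_pos N). nra. }
  exists omega. split; auto.
  intros b Hb HN xi lam Hsec.
  set (rho := vnorm d xi) in *.
  set (gam := / (4 * kappa)) in *.
  assert (Hrho : 0 <= rho) by apply vnorm_ge0.
  assert (Hrm : 0 <= rho ^ m) by (apply pow_le; auto).
  assert (Hgam : kappa * gam = /4) by (unfold gam; field; lra).
  assert (Hgam0 : 0 < gam) by (unfold gam; apply Rinv_0_lt_compat; lra).
  apply sector_re in Hsec.
  set (mu := Cplus lam (RtoC (gam * rho ^ m))) in *.
  assert (Hmu : omega <= fst mu) by (unfold mu; simpl; lra).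
  destruct (resolvent d m am kappa Hm Hlin Hell xi mu ltac:(lra)) as [Rz [HRl [HRa [HRb HRn]]]].
  fold rho in HRn.
  set (A := shift mu (principal d m am xi)) in *.
  set (B := poly_sym d (m-1) b xi).
  set (P := fun x => plus (scal (RtoC (- (gam * rho^m))) x) (B x)).
  set (K := fun x => Rz (P x)).
  assert (HBl : is_linear B) by (apply poly_linear; auto).
  assert (HPl : is_linear P) by (apply is_linear_plusf; [apply is_linear_scalC | auto]).
  assert (HKl : is_linear K) by (apply (is_linear_comp P Rz); auto).
  assert (HAl : is_linear A).
  { apply is_linear_plusf; [apply is_linear_scalC | apply principal_linear; auto]. }
  set (D := rho ^ m + Cmod mu) in *.
  assert (HD : rho ^ m + omega <= D).
  { pose proof (re_le_Cmod mu). unfold Re in H. pose proof (Rle_abs (fst mu)). unfold D. lra. }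
  assert (HD0 : 0 < D) by lra.
  set (Q := gam * rho^m + Rabs N * (1+rho)^(m-1)).
  assert (HQ : kappa * Q <= D / 2).
  { unfold Q. rewrite Rmult_plus_distr_l, <- Rmult_assoc, Hgam.
    specialize (Homb rho Hrho). replace (S (m - 1)) with m in Homb by lia. lra. }
  assert (HPn : forall x, norm (P x) <= Q * norm x).
  { intros x. unfold P. eapply Rle_trans. apply Xnorm_triangle.
    pose proof (Xnorm_scalR (-(gam*rho^m)) x) as H1.
    pose proof (nzero_bound d (m-1) b N Hb HN xi x) as H2. fold rho B in H2.
    rewrite Rabs_Ropp, Rabs_pos_eq in H1 by (apply Rmult_le_pos; lra).
    assert (Hp : 0 <= (1 + rho) ^ (m - 1)) by (apply pow_le; lra).
    pose proof (Xnorm_ge_0 x). pose proof (Rle_abs N).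
    assert (N * (1 + rho) ^ (m - 1) * norm x <= Rabs N * (1 + rho) ^ (m - 1) * norm x).
    { apply Rmult_le_compat_r; auto. apply Rmult_le_compat_r; auto. }
    unfold Q. nra. }
  assert (HKn : forall x, norm (K x) <= /2 * norm x).
  { intros x. unfold K. eapply Rle_trans. apply HRn.
    eapply Rle_trans. apply Rmult_le_compat_l. { apply Rdiv_le_0_compat; lra. } apply HPn.
    pose proof (Xnorm_ge_0 x).
    replace (kappa / D * (Q * norm x)) with ((kappa * Q) / D * norm x) by (field; lra).
    apply Rmult_le_compat_r; auto.
    apply Rle_trans with ((D / 2) / D). { apply Rmult_le_compat_r; [apply Rlt_le, Rinv_0_lt_compat|]; lra. }
    right. field. lra. }
  destruct (neumann K HKl HKn) as [J [HJl [HJa [HJb HJn]]]].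
  assert (Hlam : lam = Cplus mu (RtoC (- (gam * rho ^ m)))).
  { unfold mu. destruct lam as [a c]. unfold Cplus, RtoC; simpl. f_equal; ring. }
  assert (HT : forall x, shift lam (fun x => plus (principal d m am xi x) (poly_sym d (m - 1) b xi x)) x
                = A (plus x (K x))).
  { intros x. rewrite (Xlin_plus A HAl). unfold K. rewrite HRb. unfold A, shift, P.
    rewrite Hlam. rewrite (scal_distr_r mu). fold B. apply Xg_swap2. }
  exists (fun y => J (Rz y)).
  split; [|split; [|split]].
  - apply (is_linear_comp Rz J); auto.
  - intros x. rewrite HT, HRa. apply HJa.
  - intros y. rewrite HT, HJb. apply HRb.
  - intros y. eapply Rle_trans. apply HJn.
    pose proof (HRn y). pose proof (Xnorm_ge_0 y).
    assert (kappa / D * norm y <= (4 * kappa + 2) / D * norm y).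
    { apply Rmult_le_compat_r; auto. unfold Rdiv. apply Rmult_le_compat_r. apply Rlt_le, Rinv_0_lt_compat; lra. lra. }
    assert (0 <= kappa / D * norm y) by (apply Rmult_le_pos; auto; apply Rdiv_le_0_compat; lra).
    fold D. nra.
Qed.
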